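(* Let $H=\Bbbk^G{}^\tau\#_\sigma\Bbbk F$ be as in the context and fix $f\in F$. (1) The map $\Bbbk^{G_f}_{\tau_f}\to H'_f$, $p_g\mapsto p_g\#f$ ($g\in G_f$), is a coalgebra isomorphism onto the subcoalgebra $\mathrm{span}\{p_g\#f\mid g\in G_f\}$ of $H'_f$. (2) If $(V,\rho)$ is a right $\Bbbk^{G_f}_{\tau_f}$-comodule with $\rho(v)=\sum_{g\in G_f}v_g\otimes p_g$, then $V\otimes\Bbbk f$ is a right $H'_f$-comodule via $\rho'(v\otimes f)=\sum_{g\in G_f}v_g\otimes f\otimes p_g\#f$. (3) The cotensor product $\tilde V=(V\otimes\Bbbk f)\Box_{H'_f}H$ is a right $H$-comodule with coaction $\mathrm{id}\otimes\Delta$, and $\tilde V=\bigoplus_{z\in T_f}V\otimes\Bbbk f\otimes z$ as vector spaces, where for $v\in V$, $z\in T_f$ the symbol $v\otimes f\otimes z$ denotes the element $\sum_{g\in G_f}\tau(gz,z^{-1};f)\,v_g\otimes f\otimes p_{gz}\#(z^{-1}\triangleright f)\in\tilde V$ (the map $v\mapsto v\otimes f\otimes z$ being injective and linear). Writing each $x\in G$ uniquely as $x=g_xz_x$ with $g_x\in G_f$, $z_x\in T_f$, the coaction is $$\tilde\rho(v\otimes f\otimes z)=\sum_{x\in G}\tau(z_x^{-1},g_x^{-1};f)^{-1}\tau(z_x^{-1}g_x^{-1}z,z^{-1};f)\;v_{g_x^{-1}}\otimes f\otimes z_x\otimes p_{x^{-1}z}\#(z^{-1}\triangleright f)$$ for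 all $v\in V$, $z\in T_f$.
   Context: Standing setup: $\Bbbk$ is an algebraically closed field of characteristic $0$, $F$ a group (possibly infinite), $G$ a finite group, and $(F,G,\triangleleft,\triangleright)$ a matched pair: $\triangleright:G\times F\to F$ a left action of $G$ on the set $F$, $\triangleleft:G\times F\to G$ a right action of $F$ on the set $G$, with $g\triangleright(ff')=(g\triangleright f)((g\triangleleft f)\triangleright f')$ and $(gg')\triangleleft f=(g\triangleleft(g'\triangleright f))(g'\triangleleft f)$. Maps $\sigma:G\times F\times F\to\Bbbk^\times$, $(g,f,f')\mapsto\sigma(g;f,f')$, and $\tau:G\times G\times F\to\Bbbk^\times$, $(g,g',f)\mapsto\tau(g,g';f)$, satisfy: $\sigma(g;1_F,f)=\sigma(g;f,1_F)=\sigma(1_G;f,f')=1$; $\sigma(g\triangleleft f;f',f'')\sigma(g;f,f'f'')=\sigma(g;f,f')\sigma(g;ff',f'')$; $\tau(1_G,g;f)=\tau(g,1_G;f)=\tau(g,g';1_F)=1$; $\tau(g,g';g''\triangleright f)\tau(gg',g'';f)=\tau(g,g'g'';f)\tau(g',g'';f)$; and $\sigma(gg';f,f')\tau(g,g';ff')=\sigma(g;g'\triangleright f,(g'\triangleleft f)\triangleright f')\sigma(g';f,f')\tau(g,g';f)\tau(g\triangleleft(g'\triangleright f),g'\triangleleft f;f')$. $H$ has basis $\{p_g\#f\}$, product $(p_g\#f)(p_{g'}\#f')=\delta_{g\triangleleft f,g'}\sigma(g;f,f')p_g\#ff'$, coproduct $\Delta(p_g\#f)=\sum_{x\in G}\tau(gx^{-1},x;f)\,p_{gx^{-1}}\#(x\triangleright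 f)\otimes p_x\#f$, counit $\varepsilon(p_g\#f)=\delta_{g,1_G}$. Notation: $G_f=\{g\in G\mid g\triangleright f=f\}$; $T_f$ is a complete set of right coset representatives of $G_f$ in $G$ (so $G=\bigsqcup_{z\in T_f}G_fz$) with $1_G\in T_f$. $\Bbbk^{G_f}_{\tau_f}$ is the coalgebra with basis $\{p_g\}_{g\in G_f}$, $\Delta(p_g)=\sum_{x\in G_f}\tau(gx^{-1},x;f)p_{gx^{-1}}\otimes p_x$, $\varepsilon(p_g)=\delta_{g,1_G}$. $H'_f=\Bbbk^{G_f}{}^\tau\#\Bbbk F$ is the coalgebra with basis $\{p_g\#f'\mid g\in G_f,f'\in F\}$, $\Delta(p_g\#f')=\sum_{x\in G_f}\tau(gx^{-1},x;f')p_{gx^{-1}}\#(x\triangleright f')\otimes p_x\#f'$, $\varepsilon(p_g\#f')=\delta_{g,1_G}$; the projection $\pi_f:H\to H'_f$ keeping the terms with $g\in G_f$ is a coalgebra epimorphism, making $H$ a left $H'_f$-comodule via $(\pi_f\otimes\mathrm{id})\Delta$. For a right $C$-comodule $(M,\rho_M)$ and left $C$-comodule $(N,\rho_N)$, $M\Box_CN=\ker(\rho_M\otimes\mathrm{id}-\mathrm{id}\otimes\rho_N)\subseteq M\otimes N$. *)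

(* Defs.v *)
From HB Require Import structures.
From mathcomp Require Import all_boot all_algebra all_fingroup.

Set Implicit Arguments.
Unset Strict Implicit.
Unset Printing Implicit Defensive.

Import GRing.Theory.
Local Open Scope ring_scope.

(* - an element of H (basis p_g # f', g : G, f' : F) is its coefficient      *)
(*   function G -> F -> k ; an element of M (x) H (M a k-space) is its        *)
(*   coefficient function G -> F -> M (finitely supported); an element of     *)
(*   M (x) H (x) H is a coefficient function G -> F -> G -> F -> M.           *)
(* - the coefficient of p_h1#f1 (x) p_h2#f2 in Delta(p_g#f') =                *)
(*   sum_x tau(gx^-1,x;f') p_{gx^-1}#(x|>f') (x) p_x#f' is nonzero only for   *)
(*   g = h1 h2, f' = f2, f1 = h2 |> f2, which gives the coefficient formula   *)
(*   [DeltaH] below (checked against the basis formula in [DeltaH_basis]).    *)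

Section Setting.
Variables (k : fieldType) (F : groupType) (G : finGroupType).
Variables (lact : G -> F -> F) (ract : G -> F -> G).
Variables (sigma : G -> F -> F -> k) (tau : G -> G -> F -> k).

(* (F, G, <|, |>) is a matched pair: |> left action of G on the set F,     *)
(* <| right action of F on the set G, plus the two compatibilities.        *)
Definition matched_pair : Prop :=
  (forall x : F, lact 1%g x = x) /\
  (forall (g h : G) (x : F), lact (g * h)%g x = lact g (lact h x)) /\
  (forall g : G, ract g 1%g = g) /\
  (forall (g : G) (x y : F), ract g (x * y)%g = ract (ract g x) y) /\
  (forall (g : G) (x y : F),
      lact g (x * y)%g = (lact g x * lact (ract g x) y)%g) /\
  (forall (g h : G) (x : F),
      ract (g * h)%g x = (ract g (lact h x) * ract h x)%g).

Definition sigma_tau_conditions : Prop :=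
  (forall g x y, sigma g x y != 0) /\
  (forall g h x, tau g h x != 0) /\
  (forall g x, sigma g 1%g x = 1 /\ sigma g x 1%g = 1 /\
               (forall y, sigma 1%g x y = 1)) /\
  (forall g x y z, sigma (ract g x) y z * sigma g x (y * z)%g
                   = sigma g x y * sigma g (x * y)%g z) /\
  (forall g h x, tau 1%g g x = 1 /\ tau g 1%g x = 1 /\ tau g h 1%g = 1) /\
  (forall g h l x, tau g h (lact l x) * tau (g * h)%g l x
                   = tau g (h * l)%g x * tau h l x) /\
  (forall g h x y,
          sigma (g * h)%g x y * tau g h (x * y)%g
          = sigma g (lact h x) (lact (ract h x) y) * sigma h x y * tau g h x
            * tau (ract g (lact h x)) (ract h x) y).

Definition stab (f : F) : {set G} := [set g | lact g f == f].

Definition right_transversal (f : F) (T : {set G}) : Prop :=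
  is_transversal T (rcosets (stab f) [set: G]) [set: G] /\ 1%g \in T.

Definition zpart (f : F) (T : {set G}) (x : G) : G :=
  odflt 1%g [pick z in T | (x * z^-1)%g \in stab f].
Definition gpart (f : F) (T : {set G}) (x : G) : G :=
  (x * (zpart f T x)^-1)%g.

(* DeltaC f g a b = coefficient of p_a (x) p_b in Delta(p_g).                *)
Definition DeltaC (f : F) (g a b : G) : k :=
  \sum_(x in stab f) tau (g * x^-1)%g x f
                     * ((a == (g * x^-1)%g)%:R * (b == x)%:R).
Definition epsC (g : G) : k := (g == 1%g)%:R.

Section Modules.
Variable M : lmodType k.

(* Right k^{G_f}_{tau_f}-comodule (V, rho), rho(v) = sum_{g in G_f} v_g (x) p_g, *)
(* encoded by the coordinate maps vc g : v |-> v_g (g \in G_f).             *)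
Definition is_right_comod_C (f : F) (vc : G -> M -> M) : Prop :=
  [/\ (forall g a v w, g \in stab f -> vc g (a *: v + w) = a *: vc g v + vc g w),
      (* (rho (x) id) rho = (id (x) Delta) rho *)
      (forall v a b, a \in stab f -> b \in stab f ->
          vc a (vc b v) = \sum_(y in stab f) DeltaC f y a b *: vc y v) &
      (* (id (x) eps) rho = id *)
      (forall v, \sum_(g in stab f) epsC g *: vc g v = v)].

Definition finsupp (X : G -> F -> M) : Prop :=
  exists s : seq F, forall g x, x \notin s -> X g x = 0.

Definition basisH (g : G) (x : F) : G -> F -> k :=
  fun h y => ((h == g) && (y == x))%:R.

Definition DeltaH (X : G -> F -> M) : G -> F -> G -> F -> M :=
  fun h1 f1 h2 f2 =>
    if f1 == lact h2 f2 then tau h1 h2 f2 *: X (h1 * h2)%g f2 else 0.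

Definition epsH (g : G) (x : F) : k := (g == 1%g)%:R.

(* (id (x) eps)(Y) = m, for Y a finitely supported element of M (x) H *)
Definition counit_is (Y : G -> F -> M) (m : M) : Prop :=
  exists s : seq F, [/\ uniq s, (forall g x, x \notin s -> Y g x = 0) &
    \sum_(x <- s) \sum_(g : G) epsH g x *: Y g x = m].

Definition in_Hp (f : F) (X : G -> F -> M) : Prop :=
  finsupp X /\ forall g x, g \notin stab f -> X g x = 0.

(* comultiplication of H'_f: Delta(p_g#x) = sum_{y in G_f} tau(gy^-1,y;x)  *)
(*   p_{gy^-1}#(y|>x) (x) p_y#x, in coefficient form                         *)
Definition DeltaHp (f : F) (X : G -> F -> M) : G -> F -> G -> F -> M :=
  fun h1 f1 h2 f2 =>
    if (h1 \in stab f) && (h2 \in stab f) then DeltaH X h1 f1 h2 f2 else 0.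

(* (pi_f (x) id) applied to an element of M (x) H (x) H *)
Definition proj1f (f : F) (Y : G -> F -> G -> F -> M) : G -> F -> G -> F -> M :=
  fun h1 f1 h2 f2 => if h1 \in stab f then Y h1 f1 h2 f2 else 0.

Definition is_right_comod_Hp (f : F) (rho : M -> G -> F -> M) : Prop :=
  [/\ (forall a m m' g x, rho (a *: m + m') g x = a *: rho m g x + rho m' g x),
      (forall m, in_Hp f (rho m)),
      (forall m h1 f1 h2 f2,
          rho (rho m h2 f2) h1 f1 = DeltaHp f (rho m) h1 f1 h2 f2) &
      (forall m, counit_is (rho m) m)].

(* M (x) H as a left H'_f-comodule via (pi_f (x) id) Delta; the cotensor  *)
(* product M box_{H'_f} H = ker(rho (x) id - id (x) (pi_f (x) id)Delta),   *)
(* as a predicate on (finitely supported) elements of M (x) H.             *)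
Definition cotensorH (f : F) (rho : M -> G -> F -> M) (X : G -> F -> M) : Prop :=
  finsupp X /\
  forall h1 f1 h2 f2, rho (X h2 f2) h1 f1 = proj1f f (DeltaH X) h1 f1 h2 f2.

(* Elements of W (x) H are coefficient functions G -> F -> (G -> F -> M)    *)
(* with all coefficients in W.                                             *)
Definition is_right_comod_H_sub (W : (G -> F -> M) -> Prop)
  (rho : (G -> F -> M) -> G -> F -> G -> F -> M) : Prop :=
  [/\
      (W (fun _ _ => 0) /\
       forall a X Y, W X -> W Y -> W (fun g x => a *: X g x + Y g x)),
      (forall a X Y h1 f1 h2 f2, W X -> W Y ->
         rho (fun g x => a *: X g x + Y g x) h1 f1 h2 f2
         = a *: rho X h1 f1 h2 f2 + rho Y h1 f1 h2 f2),
      (forall X, W X ->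
         (exists s : seq F, forall h1 f1 h2 f2, f2 \notin s ->
              rho X h1 f1 h2 f2 = 0) /\
         (forall h2 f2, W (fun h1 f1 => rho X h1 f1 h2 f2))),
      (* (rho (x) id) rho = (id (x) Delta) rho *)
      (forall X, W X -> forall a1 b1 a2 b2 a3 b3,
         rho (fun h x => rho X h x a3 b3) a1 b1 a2 b2
         = DeltaH (fun h x => rho X a1 b1 h x) a2 b2 a3 b3) &
      (* (id (x) eps) rho = id *)
      (forall X, W X -> exists s : seq F,
         [/\ uniq s, (forall h1 f1 g x, x \notin s -> rho X h1 f1 g x = 0) &
          forall h1 f1, \sum_(x <- s) \sum_(g : G) epsH g x *: rho X h1 f1 g x
                        = X h1 f1])].

End Modules.

Lemma DeltaH_basis (g : G) (x : F) h1 f1 h2 f2 :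
  DeltaH (M := k^o) (basisH g x) h1 f1 h2 f2 =
  \sum_(y : G) tau (g * y^-1)%g y x
     * (basisH (g * y^-1)%g (lact y x) h1 f1 * basisH y x h2 f2).
Proof.
rewrite (bigD1 h2) //= big1 ?addr0 => [|y ne]; last first.
  by rewrite /basisH [h2 == y]eq_sym (negbTE ne) /= !mulr0.
rewrite /DeltaH /basisH eqxx /=.
have Z : (false%:R : k) = 0 by [].
have O : (true%:R : k) = 1 by [].
have [->|nx] := eqVneq f2 x; last first.
  by rewrite !andbF Z !mulr0; case: ifP => _ //; rewrite scaler0.
rewrite !andbT O mulr1.
have E : (h1 * h2 == g)%g = (h1 == g * h2^-1)%g.
  by apply/eqP/eqP => [<-|->]; rewrite ?mulgK ?mulgKV.
rewrite E; have [->|_] := eqVneq h1 (g * h2^-1)%g.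
  case: (f1 == lact h2 x); rewrite /= ?O ?Z ?mulr1 ?mulr0 //.
  exact: mulr1.
by rewrite /= Z mulr0; case: ifP => _ //; rewrite scaler0.
Qed.


(* the map k^{G_f}_{tau_f} -> H'_f, p_g |-> p_g # f, on coefficients        *)
Definition phi (f : F) (c : G -> k) : G -> F -> k :=
  fun h x => if (h \in stab f) && (x == f) then c h else 0.
(* phi (x) phi on coefficient functions of C (x) C *)
Definition phi2 (f : F) (D : G -> G -> k) : G -> F -> G -> F -> k :=
  fun h1 f1 h2 f2 =>
    if [&& h1 \in stab f, h2 \in stab f, f1 == f & f2 == f] then D h1 h2 else 0.
Definition basisC (g : G) : G -> k := fun h => (h == g)%:R.
Definition in_Sf (f : F) (X : G -> F -> k) : Prop :=
  forall h x, ~~ ((h \in stab f) && (x == f)) -> X h x = 0.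

Section Vdata.
Variables (V : lmodType k) (f : F) (vc : G -> V -> V).

(* rho'(v (x) f) = sum_{g in G_f} v_g (x) f (x) p_g # f ; V (x) kf == V *)
Definition rhoVf (v : V) : G -> F -> V :=
  fun h x => \sum_(g in stab f) (if (h == g) && (x == f) then vc g v else 0).

Definition Vtilde : (G -> F -> V) -> Prop := cotensorH f rhoVf.

Definition embz (z : G) (v : V) : G -> F -> V :=
  fun h x => \sum_(g in stab f) tau (g * z)%g z^-1%g f *:
     (if (h == (g * z)%g) && (x == lact z^-1%g f) then vc g v else 0).
End Vdata.

End Setting.

(* Main.v *)
Require Import Defs.
From HB Require Import structures.
From mathcomp Require Import all_boot all_algebra all_fingroup.
From mathcomp Require Import ring.

Import GRing.Theory.
Local Open Scope ring_scope.

Module Aux.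
Set Implicit Arguments. Unset Strict Implicit. Unset Printing Implicit Defensive.
Lemma sum_pick (G : finType) (V : nmodType) (P : pred G) (g0 : G) (Fn : G -> V) :
  \sum_(g | P g) (if g == g0 then Fn g else 0) = if P g0 then Fn g0 else 0.
Proof.
case Pg0: (P g0).
  rewrite (bigD1 g0) //= eqxx big1 ?addr0 // => g /andP[_ /negbTE ->] //.
apply: big1 => g Pg; case: eqP => // e; by rewrite e Pg0 in Pg.
Qed.

Lemma sum_pick_set (G : finType) (V : nmodType) (A : {set G}) (g0 : G) (Fn : G -> V) :
  \sum_(g in A) (if g == g0 then Fn g else 0) = if g0 \in A then Fn g0 else 0.
Proof. exact: (sum_pick (fun g => g \in A)). Qed.

Section Aux.
Variables (k : fieldType) (F : groupType) (G : finGroupType).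
Variables (lact : G -> F -> F) (ract : G -> F -> G).
Variables (sigma : G -> F -> F -> k) (tau : G -> G -> F -> k).
Hypothesis hmp : matched_pair lact ract.
Hypothesis hst : sigma_tau_conditions lact ract sigma tau.
Variable f : F.
Local Notation S := (stab lact f).

Lemma act1 x : lact 1%g x = x. Proof. by case: hmp. Qed.
Lemma actM g h x : lact (g * h)%g x = lact g (lact h x). Proof. by case: hmp => _ []. Qed.
Lemma stabE g : (g \in S) = (lact g f == f). Proof. by rewrite inE. Qed.
Lemma stab1 : 1%g \in S. Proof. by rewrite stabE act1. Qed.
Lemma stabM a b : a \in S -> b \in S -> (a * b)%g \in S.
Proof. by rewrite !stabE actM => /eqP Ha /eqP ->; rewrite Ha. Qed.
Lemma stabV a : a \in S -> a^-1%g \in S.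
Proof. rewrite !stabE => /eqP Ha. by rewrite -{1}Ha -actM mulVg act1. Qed.
Lemma stabMl a b : a \in S -> ((a * b)%g \in S) = (b \in S).
Proof.
move=> Ha; apply/idP/idP => [H|]; last exact: stabM.
by rewrite -(mulKg a b); apply: stabM => //; apply: stabV.
Qed.
Lemma stabMr a b : b \in S -> ((a * b)%g \in S) = (a \in S).
Proof.
move=> Hb; apply/idP/idP => [H|]; last by move=> ?; exact: stabM.
by rewrite -(mulgK b a); apply: stabM => //; apply: stabV.
Qed.
Lemma stabVM a b : ((a * b^-1)%g \in S) = ((b * a^-1)%g \in S).
Proof.
apply/idP/idP => /stabV; by rewrite invMg invgK.
Qed.
Lemma stab_act g : g \in S -> lact g f = f. Proof. by rewrite stabE => /eqP. Qed.

Lemma tau_ne0 g h x : tau g h x != 0. Proof. by case: hst => _ []. Qed.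
Lemma tau1l g x : tau 1%g g x = 1. Proof. by case: hst => _ [_ [_ [_ [H _]]]]; case: (H g g x). Qed.
Lemma tau1r g x : tau g 1%g x = 1. Proof. by case: hst => _ [_ [_ [_ [H _]]]]; case: (H g g x) => _ []. Qed.
Lemma tau_coc g h l x : tau g h (lact l x) * tau (g * h)%g l x = tau g (h * l)%g x * tau h l x.
Proof. by case: hst => _ [_ [_ [_ [_ [H _]]]]]. Qed.

Lemma DeltaCE a b y : b \in S -> DeltaC lact tau f y a b = if y == (a * b)%g then tau a b f else 0.
Proof.
move=> Hb; rewrite /DeltaC (bigD1 b) //= big1 ?addr0; last first.
  by move=> x /andP[_ nx]; rewrite [b == x]eq_sym (negbTE nx) /= !mulr0.
rewrite eqxx mulr1; have -> : (a == y * b^-1)%g = (y == a * b)%g.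
  by apply/eqP/eqP => ->; rewrite ?mulgKV ?mulgK.
by case: eqP => [->|]; rewrite ?mulgK ?mulr1 ?mulr0.
Qed.

Section Comod.
Variables (V : lmodType k) (vc : G -> V -> V).
Hypothesis hc : is_right_comod_C lact tau f vc.

Lemma vc_lin g a v w : g \in S -> vc g (a *: v + w) = a *: vc g v + vc g w.
Proof. by case: hc => H _ _; apply: H. Qed.
Lemma vc_add g v w : g \in S -> vc g (v + w) = vc g v + vc g w.
Proof. by move=> Hg; have := vc_lin 1 v w Hg; rewrite !scale1r. Qed.
Lemma vc0 g : g \in S -> vc g 0 = 0.
Proof. move=> Hg; have := vc_add 0 0 Hg; rewrite addr0 => H. by apply: (addrI (vc g 0)); rewrite addr0 -H. Qed.
Lemma vc_scale g a v : g \in S -> vc g (a *: v) = a *: vc g v.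
Proof. by move=> Hg; have := vc_lin a v 0 Hg; rewrite !addr0 vc0 // addr0. Qed.
Lemma vc_sum (I : finType) (P : pred I) (Fn : I -> V) g : g \in S ->
  vc g (\sum_(i | P i) Fn i) = \sum_(i | P i) vc g (Fn i).
Proof.
move=> Hg; elim/big_rec2: _ => [|i x y _ <-]; [exact: vc0|exact: vc_add].
Qed.
Lemma vcvc a b v : a \in S -> b \in S -> vc a (vc b v) = tau a b f *: vc (a * b)%g v.
Proof.
case: hc => _ H _ Ha Hb; rewrite H //.
under eq_bigr => y _ do rewrite DeltaCE // (fun_if (fun c => c *: vc y v)) scale0r.
by rewrite sum_pick stabM.
Qed.
Lemma vc1 v : vc 1%g v = v.
Proof.
case: hc => _ _ H; rewrite -{2}(H v) (bigD1 1%g) ?stab1 //= big1 ?addr0 /epsC ?eqxx ?scale1r //.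
by move=> y /andP[_ /negbTE ->]; rewrite scale0r.
Qed.
End Comod.

Lemma rhoVfE (V : lmodType k) (vc : G -> V -> V) v h x :
  rhoVf lact f vc v h x = if (h \in S) && (x == f) then vc h v else 0.
Proof.
rewrite /rhoVf (eq_bigr (fun g => if g == h then (if x == f then vc g v else 0) else 0)).
  rewrite sum_pick_set; by case: (h \in S); case: (x == f).
by move=> g _; rewrite [h == g]eq_sym; case: (g == h).
Qed.

Lemma embzE (V : lmodType k) (vc : G -> V -> V) z v h x :
  embz lact tau f vc z v h x =
  if (x == lact z^-1%g f) && ((h * z^-1)%g \in S)
  then tau h z^-1%g f *: vc (h * z^-1)%g v else 0.
Proof.
rewrite /embz (eq_bigr (fun g => if g == (h * z^-1)%g then (if x == lact z^-1%g f then tau h z^-1%g f *: vc g v else 0) else 0)).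
  rewrite sum_pick_set; by case: (_ \in S); case: (x == _).
move=> g _.
have -> : (h == g * z)%g = (g == h * z^-1)%g by apply/eqP/eqP => ->; rewrite ?mulgK ?mulgKV.
case: eqP => [->|]; rewrite ?mulgKV //= ?scaler0 //.
by case: (x == _); rewrite ?scaler0.
Qed.

Section Transv.
Variable T : {set G}.
Hypothesis hT : right_transversal lact f T.

Lemma coset_card x : #|T :&: (S :* x)%g| = 1%N.
Proof.
case: hT => /and3P[_ _ /forall_inP H] _; apply/eqP; apply: H.
rewrite /rcosets; apply/imsetP; exists x; rewrite ?inE // rcosetE. done.
Qed.

Lemma T_exists x : exists2 z, z \in T & (x * z^-1)%g \in S.
Proof.
have /eqP/cards1P[z0 E] := coset_card x.
have : z0 \in T :&: (S :* x)%g by rewrite E set11.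
rewrite inE mem_rcoset => /andP[Tz Hz]; exists z0 => //.
by rewrite stabVM.
Qed.

Lemma T_uniq z z' h : z \in T -> z' \in T -> (h * z^-1)%g \in S -> (h * z'^-1)%g \in S -> z = z'.
Proof.
move=> Tz Tz' Hz Hz'; have /eqP/cards1P[z0 E] := coset_card h.
have m : forall y, y \in T -> (h * y^-1)%g \in S -> y = z0.
  move=> y Ty Hy; apply/set1P; rewrite -E inE Ty mem_rcoset.
  by rewrite stabVM.
by rewrite (m z) // (m z').
Qed.

Lemma zpartP x : zpart lact f T x \in T /\ gpart lact f T x \in S.
Proof.
rewrite /gpart /zpart; case: pickP => [z /andP[Tz Hz] | none] //=.
have [z Tz Hz] := T_exists x; by have := none z; rewrite Tz Hz.
Qed.

Lemma zpart_eq x z : z \in T -> (x * z^-1)%g \in S -> zpart lact f T x = z.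
Proof.
move=> Tz Hz; have [T1 H1] := zpartP x.
exact: (T_uniq (h := x)).
Qed.
End Transv.


Lemma sumEps (V : lmodType k) (x : F) (Y : G -> V) :
  \sum_(g : G) epsH k g x *: Y g = Y 1%g.
Proof.
rewrite (bigD1 1%g) //= /epsH eqxx scale1r big1 ?addr0 // => g /negbTE ->.
by rewrite scale0r.
Qed.

Lemma sum_seq_pick (V : nmodType) (T0 : eqType) (s : seq T0) (x0 : T0) (Fn : T0 -> V) :
  uniq s -> \sum_(x <- s) (if x0 == x then Fn x else 0) = if x0 \in s then Fn x0 else 0.
Proof.
elim: s => [|y s IH] /=; rewrite ?big_nil ?big_cons // => /andP[ny us].
rewrite IH // inE; case: eqP => [->|_] /=; last by rewrite add0r.
by rewrite (negbTE ny) addr0.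
Qed.

Lemma DeltaH_lin (V : lmodType k) a (X Y : G -> F -> V) h1 f1 h2 f2 :
  DeltaH lact tau (fun g x => a *: X g x + Y g x) h1 f1 h2 f2
  = a *: DeltaH lact tau X h1 f1 h2 f2 + DeltaH lact tau Y h1 f1 h2 f2.
Proof.
rewrite /DeltaH; case: ifP => _; last by rewrite scaler0 addr0.
by rewrite scalerDr !scalerA mulrC.
Qed.

Lemma DeltaH_coass (V : lmodType k) (X : G -> F -> V) a1 b1 a2 b2 a3 b3 :
  DeltaH lact tau (fun h x => DeltaH lact tau X h x a3 b3) a1 b1 a2 b2
  = DeltaH lact tau (fun h x => DeltaH lact tau X a1 b1 h x) a2 b2 a3 b3.
Proof.
rewrite /DeltaH; have [->|nb] := eqVneq b2 (lact a3 b3); last first.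
  by case: ifP => _; rewrite ?scaler0 //; case: ifP => _; rewrite ?scaler0.
rewrite actM; case: ifP => _; last by rewrite scaler0.
by rewrite !scalerA mulgA tau_coc mulrC.
Qed.

Section Comod2.
Variables (V : lmodType k) (vc : G -> V -> V).
Hypothesis hc : is_right_comod_C lact tau f vc.

Lemma rhoVf_lin a m m' g x :
  rhoVf lact f vc (a *: m + m') g x = a *: rhoVf lact f vc m g x + rhoVf lact f vc m' g x.
Proof.
rewrite !rhoVfE; case: ifP => [/andP[Hh _]|_]; first exact: vc_lin.
by rewrite scaler0 addr0.
Qed.
Lemma rhoVf0 g x : rhoVf lact f vc 0 g x = 0.
Proof. rewrite rhoVfE; case: ifP => [/andP[Hh _]|//]; exact: vc0. Qed.
Lemma rhoVf_scale a m g x : rhoVf lact f vc (a *: m) g x = a *: rhoVf lact f vc m g x.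
Proof. by have := rhoVf_lin a m 0 g x; rewrite !addr0 rhoVf0 addr0. Qed.

Lemma part2 : is_right_comod_Hp lact tau f (rhoVf lact f vc).
Proof.
split.
- exact: rhoVf_lin.
- move=> m; split; first by exists [:: f] => g x; rewrite inE rhoVfE => /negbTE ->; rewrite andbF.
  by move=> g x; rewrite rhoVfE => /negbTE ->.
- move=> m h1 f1 h2 f2; rewrite /DeltaHp /DeltaH !rhoVfE.
  case: (boolP (h1 \in S)) => h1S /=; last by case: (f1 == f).
  case: (boolP (h2 \in S)) => h2S /=; last first.
    by case: (f1 == f); rewrite // vc0.
  rewrite stabM //; have [->|nf2] /= := eqVneq f2 f; last first.
    by case: (f1 == f); rewrite ?vc0 //; case: ifP; rewrite ?scaler0.
  rewrite stab_act //; case: (f1 == f); last by [].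
  by rewrite vcvc.
- move=> m; exists [:: f]; split => //.
    by move=> g x; rewrite inE rhoVfE => /negbTE ->; rewrite andbF.
  by rewrite big_cons big_nil addr0 sumEps rhoVfE stab1 eqxx vc1.
Qed.
End Comod2.

Section Part3.
Variables (V : lmodType k) (vc : G -> V -> V).
Hypothesis hc : is_right_comod_C lact tau f vc.
Local Notation W := (Vtilde lact tau f vc).

Lemma DeltaH0 (X : G -> F -> V) h1 f1 h2 f2 : (forall g, X g f2 = 0) -> DeltaH lact tau X h1 f1 h2 f2 = 0.
Proof. by move=> H; rewrite /DeltaH H scaler0; case: ifP. Qed.

Lemma W_sub : is_right_comod_H_sub lact tau W (DeltaH lact tau (M := V)).
Proof.
split.
- split.
    split; first by exists [::].
    move=> h1 f1 h2 f2; rewrite rhoVf0 // /proj1f DeltaH0 //; by case: ifP.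
  move=> a X Y [[sX HsX] HX] [[sY HsY] HY]; split.
    exists (sX ++ sY) => g x; rewrite mem_cat negb_or => /andP[nX nY].
    by rewrite HsX // HsY // scaler0 addr0.
  move=> h1 f1 h2 f2; rewrite rhoVf_lin // HX HY /proj1f DeltaH_lin.
  by case: ifP => _; rewrite ?scaler0 ?addr0.
- by move=> a X Y h1 f1 h2 f2 _ _; rewrite DeltaH_lin.
- move=> X [[sX HsX] HX]; split.
    exists sX => h1 f1 h2 f2 nf2; apply: DeltaH0 => g; exact: HsX.
  move=> h2 f2; split.
    exists [:: lact h2 f2] => g x; rewrite inE /DeltaH => /negbTE ->; done.
  move=> a1 b1 a2 b2; rewrite /proj1f /DeltaH.
  have [->|nb] := eqVneq b2 (lact h2 f2); last first.
    rewrite rhoVf0 //; case: ifP => _ //; case: ifP => _ //; by rewrite scaler0.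
  rewrite rhoVf_scale // HX /proj1f /DeltaH.
  case: ifP => _; last by rewrite scaler0.
  rewrite -actM mulgA; case: ifP => _; last by rewrite !scaler0.
  by rewrite !scalerA tau_coc mulrC.
- by move=> X _ a1 b1 a2 b2 a3 b3; rewrite DeltaH_coass.
- move=> X [[sX HsX] HX]; exists (undup sX); split.
  + exact: undup_uniq.
  + move=> h1 f1 g x; rewrite mem_undup => nx; apply: DeltaH0 => g'; exact: HsX.
  + move=> h1 f1.
    under eq_bigr => x _ do rewrite sumEps /DeltaH act1 mulg1 tau1r scale1r.
    rewrite sum_seq_pick ?undup_uniq // mem_undup.
    by case: ifP => // /negbT /HsX ->.
Qed.
End Part3.

Section Part3b.
Variables (V : lmodType k) (vc : G -> V -> V).
Hypothesis hc : is_right_comod_C lact tau f vc.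
Variable T : {set G}.
Hypothesis hT : right_transversal lact f T.
Local Notation W := (Vtilde lact tau f vc).
Local Notation ez := (embz lact tau f vc).

Lemma embz_W z v : W (ez z v).
Proof.
split.
  by exists [:: lact z^-1%g f] => h x; rewrite inE embzE => /negbTE ->.
move=> h1 f1 h2 f2; rewrite rhoVfE embzE /proj1f /DeltaH embzE.
case: (boolP (h1 \in S)) => h1S /=; last by [].
have [->|nf2] /= := eqVneq f2 (lact z^-1%g f); last first.
  by case: (f1 == f); rewrite ?vc0 //; case: ifP; rewrite ?scaler0.
rewrite -mulgA (stabMl _ h1S); case: (boolP ((h2 * z^-1)%g \in S)) => hS; last first.
  by case: (f1 == f); rewrite ?vc0 //; case: ifP; rewrite ?scaler0.
rewrite -actM stab_act //; case: (f1 == f) => //.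
by rewrite vc_scale ?vcvc // mulgA !scalerA tau_coc mulrC.
Qed.

Lemma embz_lin z a v w h x : ez z (a *: v + w) h x = a *: ez z v h x + ez z w h x.
Proof.
rewrite !embzE; case: ifP => [/andP[_ H]|_]; last by rewrite scaler0 addr0.
by rewrite vc_lin // scalerDr !scalerA mulrC.
Qed.

Lemma embz_inj z v w : (forall h x, ez z v h x = ez z w h x) -> v = w.
Proof.
move=> H; have := H z (lact z^-1%g f); rewrite !embzE eqxx mulgV stab1 /= !vc1 //.
exact: (scalerI (tau_ne0 z z^-1%g f)).
Qed.

Lemma sum_embz (w : G -> V) h x :
  \sum_(z in T) ez z (w z) h x = ez (zpart lact f T h) (w (zpart lact f T h)) h x.
Proof.
have [T0 S0] := zpartP hT h.
rewrite (bigD1 (zpart lact f T h)) //= big1 ?addr0 // => z /andP[Tz nz].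
rewrite embzE; case: ifP => // /andP[_ Hz].
by move: nz; rewrite (zpart_eq hT Tz Hz) eqxx.
Qed.

Lemma X_support X h x : W X -> X h x = if x == lact h^-1%g f then X h x else 0.
Proof.
move=> [_ HX]; have := HX 1%g f h x.
rewrite rhoVfE stab1 eqxx /= vc1 // /proj1f stab1 /DeltaH mul1g tau1l scale1r => ->.
have -> : (f == lact h x) = (x == lact h^-1%g f).
  apply/eqP/eqP => [->|->]; by rewrite -actM ?mulVg ?mulgV act1.
by case: ifP.
Qed.

Lemma X_vc X z g : W X -> g \in S ->
  vc g (X z (lact z^-1%g f)) = tau g z (lact z^-1%g f) *: X (g * z)%g (lact z^-1%g f).
Proof.
move=> [_ HX] gS; have := HX g f z (lact z^-1%g f).
by rewrite rhoVfE gS eqxx /= /proj1f gS /DeltaH -actM mulgV act1 eqxx.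
Qed.

Lemma decomp X : W X -> exists w : G -> V, forall h x,
  X h x = \sum_(z in T) ez z (w z) h x.
Proof.
move=> HW; exists (fun z => (tau z z^-1%g f)^-1 *: X z (lact z^-1%g f)) => h x.
rewrite sum_embz embzE; have [T0 S0] := zpartP hT h.
set z0 := zpart lact f T h; set g0 := gpart lact f T h.
have hE : h = (g0 * z0)%g by rewrite /g0 /gpart mulgKV.
rewrite /gpart -/z0 -/g0 in S0 *.
have Eh : lact h^-1%g f = lact z0^-1%g f by rewrite hE invMg actM stab_act // stabV.
rewrite [in LHS](X_support h x HW) Eh S0 andbT.
case: eqP => // ->.
rewrite vc_scale // X_vc // mulgKV !scalerA -{1}[X h _]scale1r; congr (_ *: _).
have E := tau_coc (h * z0^-1)%g z0 z0^-1%g f; rewrite mulgKV mulgV tau1r mul1r in E.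
rewrite mulrAC [tau h _ _ * _]mulrC E mulfV ?tau_ne0 //.
Qed.

Lemma decomp_uniq (w w' : G -> V) :
  (forall h x, \sum_(z in T) ez z (w z) h x = \sum_(z in T) ez z (w' z) h x) ->
  forall z, z \in T -> w z = w' z.
Proof.
move=> H z Tz; have := H z (lact z^-1%g f); rewrite !sum_embz.
have -> : zpart lact f T z = z by apply: zpart_eq; rewrite ?mulgV ?stab1.
rewrite !embzE eqxx mulgV stab1 /= !vc1 //.
exact: (scalerI (tau_ne0 z z^-1%g f)).
Qed.

Lemma coaction z v : z \in T -> forall h1 f1 h2 f2,
  DeltaH lact tau (ez z v) h1 f1 h2 f2
  = \sum_(x : G) ((tau (zpart lact f T x)^-1%g (gpart lact f T x)^-1%g f)^-1
                * tau ((zpart lact f T x)^-1 * (gpart lact f T x)^-1 * z)%g z^-1%g f) *: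
     (if (h2 == x^-1 * z)%g && (f2 == lact z^-1%g f)
      then ez (zpart lact f T x) (vc (gpart lact f T x)^-1%g v) h1 f1 else 0).
Proof.
move=> Tz h1 f1 h2 f2.
rewrite (bigD1 (z * h2^-1)%g) //= big1 ?addr0; last first.
  move=> x nx; rewrite (_ : (h2 == x^-1 * z)%g = false) ?scaler0 //.
  apply/negbTE; apply: contra nx => /eqP ->; by rewrite invMg invgK mulKVg.
rewrite (_ : (h2 == (z * h2^-1)^-1 * z)%g = true); last by rewrite invMg invgK mulgKV eqxx.
set x0 := (z * h2^-1)%g.
have [Tx Sx] := zpartP hT x0.
set zx := zpart lact f T x0; set gx := gpart lact f T x0.
rewrite -/zx in Sx Tx *; rewrite -/gx in Sx *.
have hx : x0 = (gx * zx)%g by rewrite /gx /gpart mulgKV.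
have Ea : (zx^-1 * gx^-1)%g = (h2 * z^-1)%g by rewrite -invMg -hx /x0 invMg invgK.
rewrite Ea mulgKV /DeltaH !embzE.
have [->|nf2] /= := eqVneq f2 (lact z^-1%g f); last first.
  by case: ifP; rewrite /= ?scaler0.
have SgV := stabV Sx.
have E1 : lact h2 (lact z^-1%g f) = lact zx^-1%g f by rewrite -actM -Ea actM stab_act.
have E3 : (h1 * h2 * z^-1 = h1 * zx^-1 * gx^-1)%g by rewrite -mulgA -Ea mulgA.
rewrite E1 E3 stabMr //.
case: (f1 == _) => /=; last by rewrite scaler0.
case: ifP => hS; last by rewrite !scaler0.
rewrite vcvc // !scalerA; congr (_ *: _).
have C1 := tau_coc h1 h2 z^-1%g f.
have C2 := tau_coc h1 zx^-1%g gx^-1%g f; rewrite stab_act // Ea in C2.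
rewrite C1; have nz := tau_ne0 zx^-1%g gx^-1%g f.
have -> : tau h1 (h2 * z^-1)%g f = tau h1 zx^-1%g f * tau (h1 * zx^-1)%g gx^-1%g f / tau zx^-1%g gx^-1%g f.
  by rewrite C2 mulfK.
field.
exact: nz.
Qed.
End Part3b.
End Aux.

End Aux.
Import Aux.

Theorem lemma4p2
  (k : closedFieldType) (hchar : [pchar k] =i pred0)
  (F : groupType) (G : finGroupType)
  (lact : G -> F -> F) (ract : G -> F -> G)
  (sigma : G -> F -> F -> k) (tau : G -> G -> F -> k)
  (hmp : matched_pair lact ract)
  (hst : sigma_tau_conditions lact ract sigma tau)
  (f : F) (T : {set G}) (hT : right_transversal lact f T) :
  (* (1) p_g |-> p_g # f : k^{G_f}_{tau_f} -> H'_f *)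
  [/\ (* span{p_g#f | g in G_f} is a subcoalgebra of H'_f *)
      (forall X : G -> F -> k^o, in_Sf lact f X ->
         forall h1 f1 h2 f2,
           ~~ [&& h1 \in stab lact f, f1 == f, h2 \in stab lact f & f2 == f] ->
           DeltaHp lact tau f X h1 f1 h2 f2 = 0),
      (* the map is a coalgebra morphism *)
      (forall g, g \in stab lact f ->
         (forall h1 f1 h2 f2,
            DeltaHp lact tau (M := k^o) f (phi lact f (basisC k g)) h1 f1 h2 f2
            = phi2 lact f (DeltaC lact tau f g) h1 f1 h2 f2) /\
         counit_is (M := k^o) (phi lact f (basisC k g)) (epsC k g)),
      (* it is linear, injective on k^{G_f}, with image span{p_g#f | g in G_f} *)
      (forall (a : k) (c c' : G -> k) h x,
         phi lact f (fun g => a * c g + c' g) h x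
         = a * phi lact f c h x + phi lact f c' h x),
      (forall c c' : G -> k, (forall h x, phi lact f c h x = phi lact f c' h x) ->
         forall g, g \in stab lact f -> c g = c' g) &
      (forall X : G -> F -> k, in_Sf lact f X <->
         exists c : G -> k, forall h x, X h x = phi lact f c h x)]
  /\
  forall (V : lmodType k) (vc : G -> V -> V),
    is_right_comod_C lact tau f vc ->
    (* (2) V (x) kf is a right H'_f-comodule via rho' *)
    is_right_comod_Hp lact tau f (rhoVf lact f vc) /\
    (* (3) V~ = (V (x) kf) box_{H'_f} H is a right H-comodule via id (x) Delta *)
    [/\ is_right_comod_H_sub lact tau (Vtilde lact tau f vc) (DeltaH lact tau (M := V)),
        (* v |-> v (x) f (x) z is linear, injective, with values in V~ *)
        (forall z, z \in T ->
           [/\ (forall v, Vtilde lact tau f vc (embz lact tau f vc z v)),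
               (forall (a : k) v w h x,
                  embz lact tau f vc z (a *: v + w) h x
                  = a *: embz lact tau f vc z v h x + embz lact tau f vc z w h x) &
               (forall v w, (forall h x, embz lact tau f vc z v h x
                                         = embz lact tau f vc z w h x) -> v = w)]),
        (* V~ = (+)_{z in T} V (x) kf (x) z *)
        (forall X, Vtilde lact tau f vc X ->
           exists w : G -> V, forall h x,
             X h x = \sum_(z in T) embz lact tau f vc z (w z) h x),
        (forall w w' : G -> V,
           (forall h x, \sum_(z in T) embz lact tau f vc z (w z) h x
                        = \sum_(z in T) embz lact tau f vc z (w' z) h x) ->
           forall z, z \in T -> w z = w' z) &
        (* the coaction formula *)
        (forall z v, z \in T -> forall h1 f1 h2 f2,
           DeltaH lact tau (embz lact tau f vc z v) h1 f1 h2 f2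
           = \sum_(x : G)
               ((tau (zpart lact f T x)^-1%g (gpart lact f T x)^-1%g f)^-1
                * tau ((zpart lact f T x)^-1 * (gpart lact f T x)^-1 * z)%g
                      z^-1%g f) *:
               (if (h2 == x^-1 * z)%g && (f2 == lact z^-1%g f)
                then embz lact tau f vc (zpart lact f T x)
                       (vc (gpart lact f T x)^-1%g v) h1 f1
                else 0))].
Proof.
Proof.
have S1 := stab1 hmp f.
split.
  split.
  - move=> X HX h1 f1 h2 f2 Hn; rewrite /DeltaHp /DeltaH.
    case h1S: (h1 \in stab lact f) => //=; case h2S: (h2 \in stab lact f) => //=.
    case: eqP => // Ef1.
    have [Ef2|nf2] := eqVneq f2 f.
      by move: Hn; rewrite Ef1 Ef2 (stab_act h2S) h1S h2S eqxx.
    by rewrite HX ?scaler0 // (negbTE nf2) andbF.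
  - move=> g gS; split.
      move=> h1 f1 h2 f2; rewrite /DeltaHp /DeltaH /phi /phi2 /basisC.
      case h1S: (h1 \in stab lact f) => //=; case h2S: (h2 \in stab lact f) => //=.
      rewrite (stabM hmp h1S h2S) /= (DeltaCE tau _ _ h2S).
      have [->|nf2] := eqVneq f2 f; rewrite ?andbT ?andbF; last first.
        by case: ifP => _; rewrite ?scaler0.
      rewrite (stab_act h2S); case: (f1 == f) => //.
      rewrite [g == _]eq_sym; case: eqP => _ /=; [exact: mulr1 | exact: scaler0].
    exists [:: f]; split => //.
      by move=> h x; rewrite inE /phi => /negbTE ->; rewrite andbF.
    rewrite big_cons big_nil addr0 sumEps /phi S1 eqxx /= /basisC /epsC.
    by rewrite eq_sym.
  - by move=> a c c' h x; rewrite /phi; case: ifP => _; rewrite ?mulr0 ?addr0.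
  - move=> c c' H g gS; have := H g f; by rewrite /phi gS eqxx.
  - move=> X; split.
      move=> HX; exists (fun h => X h f) => h x; rewrite /phi.
      case: ifP => [/andP[_ /eqP ->] //|H]; apply: HX; by rewrite H.
    move=> [c Hc] h x H; by rewrite Hc /phi (negbTE H).
move=> V vc hc; split; first exact: (part2 hmp hc).
split.
- exact: (W_sub hmp hst hc).
- move=> z Tz; split.
  + move=> v; exact: (embz_W hmp hst hc).
  + move=> a v w h x; exact: (embz_lin hc).
  + move=> v w; exact: (embz_inj hmp hst hc).
- move=> X HX; exact: (decomp hmp hst hc hT).
- move=> w w' H z Tz; exact: (decomp_uniq hmp hst hc hT H).
- move=> z v Tz; exact: (coaction hmp hst hc hT).
Qed.
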